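(* If a Banach space $X$ has a seminormalized (Schauder) basis $(e_n)$ which dominates each of its subsequences (i.e., for every increasing sequence $(k_n)$ of positive integers, $(e_n)$ dominates $(e_{k_n})$), then $\mathcal{L}(X)$ is non-separable.
   Context: $\mathcal{L}(X)$ is the space of all bounded linear operators on $X$ with the operator norm. A sequence $(e_n)$ is seminormalized if $0<\inf_n\|e_n\|\le\sup_n\|e_n\|<\infty$. $(x_n)$ dominates $(y_n)$ if there is $C>0$ with $\|\sum a_ny_n\|\le C\|\sum a_nx_n\|$ for all finitely supported scalar sequences $(a_n)$. *)

(* Defs.v *)
From mathcomp Require Import all_boot all_order all_algebra.
From mathcomp Require Import all_classical all_reals all_analysis.
Set Implicit Arguments. Unset Strict Implicit. Unset Printing Implicit Defensive.
Import Order.TTheory GRing.Theory Num.Theory.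
Import numFieldNormedType.Exports.
Local Open Scope ring_scope.
Local Open Scope classical_set_scope.

Section Defs.
Context {R : realType} {X : normedModType R}.

Definition psum (a : nat -> R) (e : nat -> X) (N : nat) : X :=
  \sum_(i < N) a i *: e i.

Definition schauder_basis (e : nat -> X) : Prop :=
  forall x : X, exists! a : nat -> R, psum a e @ \oo --> x.

Definition seminormalized (e : nat -> X) : Prop :=
  exists c C : R, 0 < c /\ forall n, c <= `|e n| <= C.

(* (x_n) dominates (y_n): ||sum a_n y_n|| <= C ||sum a_n x_n|| for finitely
   supported (a_n); a finitely supported sequence is supported in [0,N). *)
Definition dominates (x y : nat -> X) : Prop :=
  exists C : R, 0 < C /\
    forall (N : nat) (a : nat -> R), `|psum a y N| <= C * `|psum a x N|.

Definition bounded_op (T : X -> X) : Prop :=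
  linear T /\ exists C : R, forall x, `|T x| <= C * `|x|.

(* L(X) with the operator norm is separable: there is a countable family
   (D n) in L(X) such that every T in L(X) is within eps (in operator norm)
   of some D n; ||T - S|| <= eps  iff  forall x, ||T x - S x|| <= eps ||x||. *)
Definition opspace_separable : Prop :=
  exists D : nat -> X -> X, (forall n, bounded_op (D n)) /\
    forall T, bounded_op T -> forall eps : R, 0 < eps ->
      exists n, forall x, `|T x - D n x| <= eps * `|x|.
End Defs.
Arguments opspace_separable {R} X.

(* Main.v *)
Require Import Defs.
From mathcomp Require Import all_boot all_order all_algebra.
From mathcomp Require Import all_classical all_reals all_analysis.
From mathcomp Require Import ring lra.
Set Implicit Arguments.
Import Order.TTheory GRing.Theory Num.Theory.
Import numFieldNormedType.Exports.
Local Open Scope ring_scope.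
Local Open Scope classical_set_scope.

Section S.
Variables (R : realType) (X : completeNormedModType R) (e : nat -> X).
Hypothesis hb : schauder_basis e.

Lemma hb_ex (x : X) : exists a, psum a e @ \oo --> x.
Proof. by have [a [Ha _]] := hb x; exists a. Qed.

Definition coef (x : X) : nat -> R := projT1 (cid (hb_ex x)).

Lemma coefP (x : X) : psum (coef x) e @ \oo --> x.
Proof. exact: (projT2 (cid (hb_ex x))). Qed.

Lemma coef_uniq (x : X) b : psum b e @ \oo --> x -> b = coef x.
Proof.
move=> Hb; have [a [_ Ha]] := hb x.
by rewrite -(Ha _ Hb) -(Ha _ (coefP x)).
Qed.

Lemma psum_lin (y : nat -> X) r a b N :
  psum (fun i => r * a i + b i) y N = r *: psum a y N + psum b y N.
Proof.
rewrite /psum scaler_sumr -big_split /=; apply: eq_bigr => i _.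
by rewrite scalerDl scalerA.
Qed.

Lemma coef_lin r (x z : X) : coef (r *: x + z) = (fun i => r * coef x i + coef z i).
Proof.
apply/esym/coef_uniq.
rewrite (_ : psum _ e = fun N => r *: psum (coef x) e N + psum (coef z) e N); last first.
  by apply/funext => N; rewrite psum_lin.
apply: cvgD; last exact: coefP.
apply: cvgZl_tmp; exact: coefP.
Qed.

Lemma coef_e n : coef (e n) = (fun i => if i == n then 1 else 0).
Proof.
apply/esym/coef_uniq; apply: cvg_near_cst.
exists n.+1 => // N /= HN.
rewrite /psum (bigD1 (Ordinal HN)) //= eqxx scale1r big1 ?addr0 //.
move=> i Hi; case: eqP => [Hin|]; last by rewrite scale0r.
by exfalso; move/eqP: Hi; apply; apply/val_inj.
Qed.


Lemma psum_sub (y : nat -> X) a M N : (M <= N)%N ->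
  psum a y N - psum a y M = psum (fun i => if (M <= i)%N then a i else 0) y N.
Proof.
move=> HMN.
have -> : psum a y N = psum (fun i => 1 * (if (i < M)%N then a i else 0)
   + (if (M <= i)%N then a i else 0)) y N.
  rewrite /psum; apply: eq_bigr => i _; rewrite mul1r.
  by case: ltnP => _; rewrite ?add0r ?addr0.
rewrite psum_lin scale1r addrAC.
suff -> : psum (fun i => if (i < M)%N then a i else 0) y N = psum a y M.
  by rewrite subrr add0r.
rewrite /psum [RHS](big_ord_widen N (fun i => a i *: y i) HMN) [RHS]big_mkcond /=.
by apply: eq_bigr => i _; case: ifP => //; rewrite scale0r.
Qed.

Variables (k : nat -> nat) (C : R).
Hypothesis hC : 0 < C.
Hypothesis hdom : forall N a, `|psum a (fun n => e (k n)) N| <= C * `|psum a e N|.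

Lemma Top_cvg (x : X) : cvg (psum (coef x) (fun n => e (k n)) @ \oo).
Proof.
apply: cauchy_cvg; apply: cauchy_exP => eps eps0.
have /cvgrPdist_lt := coefP x.
have eps2 : 0 < eps / (2 * C) by rewrite divr_gt0 // mulr_gt0.
move=> /(_ _ eps2) [N0 _ HN].
exists (psum (coef x) (fun n => e (k n)) N0); exists N0 => // n /= Hn.
rewrite -ball_normE /ball_ /=.
rewrite -normrN opprB psum_sub //.
apply: (le_lt_trans (hdom _ _)).
rewrite -psum_sub //.
have H1 := HN n Hn; have H2 := HN N0 (leqnn N0).
have : `|psum (coef x) e n - psum (coef x) e N0| < eps / C.
  rewrite (_ : psum (coef x) e n - psum (coef x) e N0 =
     (x - psum (coef x) e N0) - (x - psum (coef x) e n)); last first.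
    by rewrite opprB [RHS]addrC addrA subrK.
  apply: (le_lt_trans (ler_normB _ _)).
  rewrite (_ : eps / C = eps / (2 * C) + eps / (2 * C)); last first.
    by field; rewrite gt_eqF.
  exact: ltrD.
by rewrite ltr_pdivlMr // mulrC.
Qed.


Definition Top (x : X) := lim (psum (coef x) (fun n => e (k n)) @ \oo).

Lemma TopP x : psum (coef x) (fun n => e (k n)) @ \oo --> Top x.
Proof. exact: Top_cvg. Qed.

Lemma Top_bound x : `|Top x| <= C * `|x|.
Proof.
have h1 : `|psum (coef x) (fun n => e (k n)) n| @[n --> \oo] --> `|Top x|.
  by apply: cvg_norm; exact: TopP.
have h2 : C * `|psum (coef x) e n| @[n --> \oo] --> C * `|x|.
  by apply: cvgMl_tmp; apply: cvg_norm; exact: coefP.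
apply: (ler_cvg_to h1 h2).
by apply: nearW => n; apply: hdom.
Qed.

Lemma Top_lin r x z : Top (r *: x + z) = r *: Top x + Top z.
Proof.
apply: norm_cvg_lim; rewrite coef_lin.
rewrite (_ : psum _ _ = fun N => r *: psum (coef x) (fun n => e (k n)) N
   + psum (coef z) (fun n => e (k n)) N); last first.
  by apply/funext => N; rewrite psum_lin.
apply: cvgD; last exact: TopP.
apply: cvgZl_tmp; exact: TopP.
Qed.

Lemma Top_e n : Top (e n) = e (k n).
Proof.
apply: norm_cvg_lim; rewrite coef_e; apply: cvg_near_cst.
exists n.+1 => // N /= HN.
rewrite /psum (bigD1 (Ordinal HN)) //= eqxx scale1r big1 ?addr0 //.
move=> i Hi; case: eqP => [Hin|]; last by rewrite scale0r.
by exfalso; move/eqP: Hi; apply; apply/val_inj.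
Qed.

Lemma Top_B x z : Top (x - z) = Top x - Top z.
Proof.
have := Top_lin (-1) z x; rewrite scaleN1r addrC => ->.
by rewrite scaleN1r addrC.
Qed.

End S.

Lemma Top_linear (R : realType) (X : completeNormedModType R) (e : nat -> X) (hb : schauder_basis e)
  (k : nat -> nat) (C : R) (hC : 0 < C)
  (hdom : forall N a, `|psum a (fun n => e (k n)) N| <= C * `|psum a e N|) :
  bounded_op (Top hb k).
Proof.
split; last by exists C => x; apply: (@Top_bound _ _ _ hb k C hC hdom).
move=> r u v; exact: (@Top_lin _ _ _ hb k C hC hdom).
Qed.

Lemma no_lim (R : realType) (X : completeNormedModType R) (e : nat -> X) (hb : schauder_basis e)
  (c : R) (hc : 0 < c) (hce : forall n, c <= `|e n|)
  (C : R) (hC : 0 < C)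
  (hdom : forall N a, `|psum a (fun n => e n.+1) N| <= C * `|psum a e N|)
  (y : X) : e @ \oo --> y -> False.
Proof.
move=> hy.
pose T := Top hb S.
have TE n : T (e n) = e n.+1 by apply: (@Top_e _ _ _ hb S n).
have hy0 : `|y - e n| @[n --> \oo] --> 0.
  have h := cvg_norm (cvgB (cvg_cst y) hy).
  rewrite subrr normr0 in h; exact: h.
have hy1 : `|y - e n.+1| @[n --> \oo] --> 0.
  by have := hy0; rewrite -(cvg_shiftS (fun n => `|y - e n|)).
have hTy : T y = y.
  apply/eqP; rewrite -subr_eq0 -normr_eq0 eq_le normr_ge0 andbT.
  have h2 : C * `|y - e n| + `|y - e n.+1| @[n --> \oo] --> C * 0 + 0.
    by apply: cvgD => //; apply: cvgMl_tmp.
  rewrite mulr0 addr0 in h2.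
  apply: (ler_cvg_to (cvg_cst _) h2); apply: nearW => n.
  rewrite (_ : T y - y = (T y - T (e n)) + (e n.+1 - y)); last first.
    by rewrite TE addrA subrK.
  apply: (le_trans (ler_normD _ _)); apply: lerD; last by rewrite distrC.
  rewrite -(@Top_B _ _ _ hb S C hC hdom); exact: (@Top_bound _ _ _ hb S C hC hdom).
pose b' := fun i => if i is j.+1 then coef hb y j else 0.
have Hb' : b' = coef hb y.
  apply: coef_uniq; rewrite -cvg_shiftS /=.
  have := @TopP _ _ _ hb S C hC hdom y; rewrite -/T hTy.
  have E : (fun n => psum b' e n.+1) = psum (coef hb y) (fun n => e n.+1).
    by apply/funext => N; rewrite /psum big_ord_recl /= scale0r add0r.
  by rewrite E.
have Hc0 n : coef hb y n = 0.
  elim: n => [|n IH]; first by rewrite -Hb'.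
  by rewrite -Hb' /= IH.
have y0 : y = 0.
  have := coefP hb y.
  rewrite (_ : psum (coef hb y) e = fun _ => 0); last first.
    apply/funext => N; rewrite /psum big1 // => i _; by rewrite Hc0 scale0r.
  move=> h; rewrite -(norm_cvg_lim h); apply: norm_cvg_lim; exact: cvg_cst.
have hn : `|e n| @[n --> \oo] --> 0.
  have h := cvg_norm hy; rewrite y0 normr0 in h; exact: h.
have : c <= 0.
  apply: (ler_cvg_to (cvg_cst _) hn); apply: nearW => n; exact: hce.
by rewrite leNgt hc.
Qed.

Lemma cantor (f : (nat -> bool) -> nat) : injective f -> False.
Proof.
move=> finj.
have : forall m : nat, exists b : nat -> bool, (exists b', f b' = m) -> f b = m.
  move=> m; case: (pselect (exists b', f b' = m)) => [[b' hb']|hn].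
    by exists b'.
  by exists (fun _ => false) => hx; exfalso; apply: hn.
move=> /choice [h hh].
pose d := fun j => ~~ h j j.
have hd : h (f d) = d by apply: finj; apply: hh; exists d.
have : d (f d) = ~~ d (f d) by rewrite {1}/d hd.
by case: (d (f d)).
Qed.

Theorem proposition2p3 (R : realType) (X : completeNormedModType R)
  (e : nat -> X) :
  schauder_basis e -> seminormalized e ->
  (forall k : nat -> nat, (forall n, (k n < k n.+1)%N) ->
     dominates e (fun n => e (k n))) ->
  ~ opspace_separable X.
Proof.
move=> hb [c [Ce [hc hce]]] hdomall [D [hD hsep]].
have hcl n : c <= `|e n| by have /andP[] := hce n.
have hcu n : `|e n| <= Ce by have /andP[] := hce n.
have [C [hC hdomS]] := hdomall S (fun n => ltnSn n).
have [δ hδ hsepN] : exists2 δ : R, 0 < δ & forall N, exists i j,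
    [/\ (N <= i)%N, (i < j)%N & δ <= `|e i - e j|].
  apply: contrapT => hn.
  have hcv : cvg (e @ \oo).
    apply: cauchy_cvg; apply: cauchy_exP => eps eps0.
    have : ~ (forall N, exists i j, [/\ (N <= i)%N, (i < j)%N & eps <= `|e i - e j|]).
      by move=> h; apply: hn; exists eps.
    move=> /existsNP [N hN].
    exists (e N); exists N => // n /= Hn.
    rewrite -ball_normE /ball_ /=.
    move: Hn; rewrite leq_eqVlt => /orP[/eqP <-|Hn].
      by rewrite subrr normr0.
    rewrite ltNge; apply/negP => hle; apply: hN; exists N, n; split => //.
  exact: (@no_lim _ _ _ hb c hc hcl C hC hdomS _ hcv).
have : forall N : nat, exists ij : nat * nat,
    [/\ (N <= ij.1)%N, (ij.1 < ij.2)%N & δ <= `|e ij.1 - e ij.2|].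
  by move=> N; have [i [j H]] := hsepN N; exists (i, j).
move=> /choice [g hg].
pose fix m n := if n is n'.+1 then (g (m n')).2.+1 else 0%N.
pose p n := (g (m n)).1.
pose q n := (g (m n)).2.
have hpq n : [/\ (m n <= p n)%N, (p n < q n)%N & δ <= `|e (p n) - e (q n)|].
  exact: hg.
pose kb (b : nat -> bool) n := if b n then q n else p n.
have kb_inc b n : (kb b n < kb b n.+1)%N.
  have [h1 h2 _] := hpq n; have [h3 h4 _] := hpq n.+1.
  have e1 : (kb b n <= q n)%N by rewrite /kb; case: (b n) => //; exact: ltnW.
  have e2 : (p n.+1 <= kb b n.+1)%N by rewrite /kb; case: (b n.+1) => //; exact: ltnW.
  apply: (leq_ltn_trans e1); apply: (leq_trans _ e2).
  by apply: (leq_trans _ h3).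
have hCe : 0 < Ce by apply: (lt_le_trans hc); apply: (le_trans (hcl 0%N)).
pose eps := δ / (3 * Ce).
have heps : 0 < eps by rewrite divr_gt0 // mulr_gt0.
have : forall b : nat -> bool, exists n : nat,
   forall x, `|Top hb (kb b) x - D n x| <= eps * `|x|.
  move=> b; have [Cb [hCb hdb]] := hdomall (kb b) (kb_inc b).
  exact: (hsep _ (@Top_linear _ _ _ hb (kb b) Cb hCb hdb) eps heps).
move=> /choice [nb hnb].
apply: (@cantor nb) => b1 b2 hb12.
apply/funext => n; apply: contrapT => hne.
have h1 := hnb b1 (e n); have h2 := hnb b2 (e n).
rewrite hb12 !Top_e in h1.
rewrite !Top_e in h2.
have hfar : δ <= `|e (kb b1 n) - e (kb b2 n)|.
  have [_ _ hd] := hpq n.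
  rewrite /kb; move: hne; case: (b1 n); case: (b2 n) => // _.
  by rewrite distrC.
have hnear : `|e (kb b1 n) - e (kb b2 n)| <= 2 * eps * Ce.
  rewrite (_ : e (kb b1 n) - e (kb b2 n) =
    (e (kb b1 n) - D (nb b2) (e n)) - (e (kb b2 n) - D (nb b2) (e n))); last first.
    by rewrite opprB addrA subrK.
  apply: (le_trans (ler_normB _ _)).
  apply: (le_trans (lerD h1 h2)).
  have := ler_wpM2l (ltW heps) (hcu n); lra.
have : δ <= 2 * eps * Ce by exact: (le_trans hfar hnear).
rewrite /eps; apply/negP; rewrite -ltNge.
have -> : 2 * (δ / (3 * Ce)) * Ce = 2 / 3 * δ by field; rewrite gt_eqF.
by rewrite gtr_pMl // ltr_pdivrMr // mul1r ltr_nat.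
Qed.
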